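(* Let $(X,f)$ be a dynamical system and $\mathcal{F}$ a Furstenberg family. The following are equivalent: (1) $(X,f)$ is transitive and $\mathcal{F}$-central; (2) $(X,f)$ is $\nabla(\mathcal{F})$-point transitive; (3) $Trans_{\nabla(\mathcal{F})}(X,f)=Trans(X,f)\neq\emptyset$.
   Context: A dynamical system is a pair $(X,f)$ with $X$ a compact metric space and $f:X\to X$ continuous. $\mathbb{N}=\{1,2,\dots\}$. For $U,V\subset X$ and $x\in X$: $N(U,V)=\{n\in\mathbb{N}: U\cap f^{-n}(V)\neq\emptyset\}$ and $N(x,U)=\{n\in\mathbb{N}: f^n(x)\in U\}$. $(X,f)$ is transitive if $N(U,V)\ne\emptyset$ for all non-empty open $U,V$. A point $x$ is a transitive point if its $\omega$-limit set $\omega(x,f)$ equals $X$; $Trans(X,f)$ denotes the set of transitive points. A Furstenberg family is a collection $\mathcal{F}$ of subsets of $\mathbb{N}$ such that $F_1\subset F_2$ and $F_1\in\mathcal{F}$ imply $F_2\in\mathcal{F}$. A point $x$ is an $\mathcal{F}$-transitive point if $N(x,U)\in\mathcal{F}$ for every non-empty open $U\subset X$; $Trans_{\mathcal{F}}(X,f)$ is the set of such points; $(X,f)$ is $\mathcal{F}$-point transitive if this set is non-empty. $(X,f)$ is $\mathcal{F}$-central if $N(U,U)\in\mathcal{F}$ for every non-empty open $U$. For $F\subset\mathbb{N}$, $F-F=\{a-b: a,b\in F,\ a>b\}$, and the reverse difference family is $\nabla(\mathcal{F})=\{F\subset\mathbb{N}: F-F\in\mathcal{F}\}$. *)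

(* Defs.v *)
From Stdlib Require Import Reals List.
Open Scope R_scope.
Set Implicit Arguments.

Record MetricSpace := {
  mcarrier :> Type;
  dist : mcarrier -> mcarrier -> R;
  dist_nonneg : forall x y, 0 <= dist x y;
  dist_sym : forall x y, dist x y = dist y x;
  dist_eq0 : forall x y, dist x y = 0 <-> x = y;
  dist_tri : forall x y z, dist x z <= dist x y + dist y z
}.

Section Dyn.
Variable X : MetricSpace.

Definition is_open (U : X -> Prop) : Prop :=
  forall x, U x -> exists e, 0 < e /\ forall y, dist X x y < e -> U y.

Definition nonempty (U : X -> Prop) : Prop := exists x, U x.

Definition mcompact : Prop :=
  forall (I : Type) (U : I -> X -> Prop),
    (forall i, is_open (U i)) -> (forall x, exists i, U i x) ->
    exists l : list I, forall x, exists i, In i l /\ U i x.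

Definition continuous (f : X -> X) : Prop :=
  forall x e, 0 < e -> exists d, 0 < d /\
    forall y, dist X x y < d -> dist X (f x) (f y) < e.

Definition iter (f : X -> X) (n : nat) (x : X) : X := Nat.iter n f x.

Definition hitting (f : X -> X) (U V : X -> Prop) : nat -> Prop :=
  fun n => (1 <= n)%nat /\ exists x, U x /\ V (iter f n x).

Definition visits (f : X -> X) (x : X) (U : X -> Prop) : nat -> Prop :=
  fun n => (1 <= n)%nat /\ U (iter f n x).

Definition transitive (f : X -> X) : Prop :=
  forall U V, is_open U -> nonempty U -> is_open V -> nonempty V ->
    exists n, hitting f U V n.

Definition omega (f : X -> X) (x : X) : X -> Prop :=
  fun y => forall e, 0 < e -> forall N : nat, exists n, (N <= n)%nat /\
    dist X (iter f n x) y < e.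

Definition Trans (f : X -> X) (x : X) : Prop := forall y, omega f x y.

Definition Trans_F (Fam : (nat -> Prop) -> Prop) (f : X -> X) (x : X) : Prop :=
  forall U, is_open U -> nonempty U -> Fam (visits f x U).

Definition F_point_transitive (Fam : (nat -> Prop) -> Prop) (f : X -> X) : Prop :=
  exists x, Trans_F Fam f x.

Definition F_central (Fam : (nat -> Prop) -> Prop) (f : X -> X) : Prop :=
  forall U, is_open U -> nonempty U -> Fam (hitting f U U).
End Dyn.

Definition furstenberg_family (Fam : (nat -> Prop) -> Prop) : Prop :=
  forall F1 F2 : nat -> Prop, (forall n, F1 n -> F2 n) -> Fam F1 -> Fam F2.

(* proper: not the whole power set (equivalently, the empty set is not in it) *)
Definition proper_family (Fam : (nat -> Prop) -> Prop) : Prop :=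
  exists S, ~ Fam S.

Definition diffset (F : nat -> Prop) : nat -> Prop :=
  fun n => exists a b, F a /\ F b /\ (b < a)%nat /\ n = (a - b)%nat.

Definition nabla (Fam : (nat -> Prop) -> Prop) : (nat -> Prop) -> Prop :=
  fun F => Fam (diffset F).

Arguments continuous {X} f.
Arguments transitive {X} f.
Arguments Trans {X} f x.
Arguments Trans_F {X} Fam f x.
Arguments F_point_transitive {X} Fam f.
Arguments F_central {X} Fam f.

(* Main.v *)
Require Import Defs.
From Stdlib Require Import Reals List Lra Lia Classical ClassicalEpsilon.

Lemma iter_add (X : MetricSpace) (f : X -> X) n m x :
  iter X f (n + m) x = iter X f n (iter X f m x).
Proof. unfold iter; induction n; simpl; [reflexivity| now rewrite IHn]. Qed.

Lemma iter_cont (X : MetricSpace) (f : X -> X) (Hf : continuous f) n :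
  continuous (iter X f n).
Proof.
  induction n; intros x e He.
  - exists e; split; [exact He| intros y Hy; exact Hy].
  - destruct (Hf (iter X f n x) e He) as [d1 [Hd1 H1]].
    destruct (IHn x d1 Hd1) as [d2 [Hd2 H2]].
    exists d2; split; [exact Hd2|]. intros y Hy. apply H1, H2, Hy.
Qed.

Lemma open_preim (X : MetricSpace) (g : X -> X) (U : X -> Prop) :
  continuous g -> is_open X U -> is_open X (fun z => U (g z)).
Proof.
  intros Hg HU z Hz. destruct (HU _ Hz) as [e [He H]].
  destruct (Hg z e He) as [d [Hd H2]]. exists d; split; auto.
Qed.

Lemma open_inter (X : MetricSpace) (U V : X -> Prop) :
  is_open X U -> is_open X V -> is_open X (fun z => U z /\ V z).
Proof.
  intros HU HV z [Hu Hv]. destruct (HU _ Hu) as [e1 [He1 H1]].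
  destruct (HV _ Hv) as [e2 [He2 H2]]. exists (Rmin e1 e2); split.
  - now apply Rmin_pos.
  - intros y Hy. split; [apply H1|apply H2]; 
    [pose proof (Rmin_l e1 e2)|pose proof (Rmin_r e1 e2)]; lra.
Qed.

Lemma ball_open (X : MetricSpace) (c : X) r : is_open X (fun z => Defs.dist X c z < r).
Proof.
  intros z Hz. exists (r - Defs.dist X c z); split; [lra|].
  intros y Hy. pose proof (Defs.dist_tri X c z y). lra.
Qed.

Lemma trans_late (X : MetricSpace) (f : X -> X) x W z :
  Trans f x -> is_open X W -> W z -> forall N, exists m, (N <= m)%nat /\ W (iter X f m x).
Proof.
  intros Ht HW Hz N. destruct (HW _ Hz) as [e [He H]].
  destruct (Ht z e He N) as [m [Hm Hd]]. exists m; split; auto.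
  apply H. rewrite Defs.dist_sym. exact Hd.
Qed.

Lemma finite_sep (X : MetricSpace) (f : X -> X) x z N :
  exists d, 0 < d /\ forall n, (n < N)%nat -> iter X f n x <> z -> d <= Defs.dist X z (iter X f n x).
Proof.
  induction N.
  - exists 1; split; [lra| intros; lia].
  - destruct IHN as [d [Hd H]].
    destruct (classic (iter X f N x = z)) as [E|E].
    + exists d; split; auto. intros n Hn Hne.
      assert (n <> N) by (intro; subst; contradiction). apply H; auto; lia.
    + assert (0 < Defs.dist X z (iter X f N x)).
      { destruct (Rle_lt_or_eq_dec 0 _ (Defs.dist_nonneg X z (iter X f N x))) as [h|h]; auto.
        symmetry in h. apply Defs.dist_eq0 in h. congruence. }
      exists (Rmin d (Defs.dist X z (iter X f N x))); split; [now apply Rmin_pos|].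
      intros n Hn Hne. destruct (Nat.eq_dec n N) as [->|h].
      * apply Rmin_r.
      * pose proof (Rmin_l d (Defs.dist X z (iter X f N x))). pose proof (H n ltac:(lia) Hne). lra.
Qed.

Lemma iter_period (X : MetricSpace) (f : X -> X) x y a b :
  (b < a)%nat -> iter X f a x = y -> iter X f b x = y ->
  forall k, iter X f (b + k * (a - b)) x = y.
Proof.
  intros Hab Ha Hb k. induction k.
  - now rewrite Nat.add_0_r.
  - replace (b + S k * (a - b))%nat with ((a - b) + (b + k * (a - b)))%nat by lia.
    rewrite iter_add, IHk, <- Hb, <- iter_add.
    replace (a - b + b)%nat with a by lia. now rewrite Ha, Hb.
Qed.

Lemma lemA (X : MetricSpace) (f : X -> X) Fam x :
  proper_family Fam -> furstenberg_family Fam ->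
  Trans_F (nabla Fam) f x -> Trans f x.
Proof.
  intros [S HS] HF Ht y e He N. apply NNPP; intro Hno.
  assert (Hfar : forall n, (N <= n)%nat -> ~ Defs.dist X (iter X f n x) y < e)
    by (intros n Hn Hd; apply Hno; eauto).
  set (U := fun z => Defs.dist X y z < e /\
                forall n, (n < N)%nat -> z = iter X f n x -> z = y).
  assert (HU : is_open X U).
  { intros z [Hz1 Hz2]. destruct (finite_sep X f x z N) as [d [Hd Hsep]].
    exists (Rmin (e - Defs.dist X y z) d); split.
    - apply Rmin_pos; lra.
    - intros w Hw. pose proof (Rmin_l (e - Defs.dist X y z) d).
      pose proof (Rmin_r (e - Defs.dist X y z) d). split.
      + pose proof (Defs.dist_tri X y z w). lra.
      + intros n Hn ->. destruct (classic (iter X f n x = z)) as [E|E].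
        * rewrite E. apply Hz2 with n; auto.
        * pose proof (Hsep n Hn E). lra. }
  assert (HUy : U y).
  { split. - rewrite (proj2 (Defs.dist_eq0 X y y) eq_refl); lra.
    - auto. }
  pose proof (Ht U HU (ex_intro _ y HUy)) as HD. unfold nabla in HD.
  destruct (classic (exists n, diffset (visits X f x U) n)) as [[n [a [b [Ha [Hb [Hab _]]]]]]|Hn].
  2:{ apply HS. apply (HF _ _ (fun n h => False_ind _ (Hn (ex_intro _ n h))) HD). }
  destruct Ha as [_ [Ua1 Ua2]]. destruct Hb as [_ [Ub1 Ub2]].
  assert (a < N)%nat.
  { destruct (Nat.lt_ge_cases a N) as [h|h]; auto. exfalso. apply (Hfar a h).
    rewrite Defs.dist_sym; exact Ua1. }
  assert (Ea : iter X f a x = y) by (apply Ua2 with a; auto).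
  assert (Eb : iter X f b x = y) by (apply Ub2 with b; auto; lia).
  apply (Hfar (b + N * (a - b))%nat); [nia|].
  rewrite (iter_period X f x y a b Hab Ea Eb N).
  rewrite (proj2 (Defs.dist_eq0 X y y) eq_refl); lra.
Qed.

Lemma lemB (X : MetricSpace) (f : X -> X) x : Trans f x -> transitive f.
Proof.
  intros Ht U V HU [u Hu] HV [v Hv].
  destruct (trans_late X f x U u Ht HU Hu 1) as [n [Hn Un]].
  destruct (trans_late X f x V v Ht HV Hv (S n)) as [m [Hm Vm]].
  exists (m - n)%nat. split; [lia|]. exists (iter X f n x). split; auto.
  rewrite <- iter_add. replace (m - n + n)%nat with m by lia. exact Vm.
Qed.

Lemma lemC (X : MetricSpace) (f : X -> X) Fam x :
  furstenberg_family Fam -> Trans_F (nabla Fam) f x -> F_central Fam f.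
Proof.
  intros HF Ht U HU HnU. apply (HF (diffset (visits X f x U))); [|apply Ht; auto].
  intros n [a [b [[_ Ha] [[Hb1 Hb] [Hab ->]]]]]. split; [lia|].
  exists (iter X f b x); split; auto. rewrite <- iter_add.
  replace (a - b + b)%nat with a by lia. exact Ha.
Qed.

Lemma lemD (X : MetricSpace) (f : X -> X) Fam x :
  continuous f -> furstenberg_family Fam -> Trans f x -> F_central Fam f ->
  Trans_F (nabla Fam) f x.
Proof.
  intros Hf HF Ht Hc U HU HnU. unfold nabla. apply (HF (hitting X f U U)); [|apply Hc; auto].
  intros n [Hn [z [Hz Hz']]].
  set (W := fun w => U w /\ U (iter X f n w)).
  assert (HW : is_open X W) by (apply open_inter; auto; apply open_preim; auto; apply iter_cont; auto).
  destruct (trans_late X f x W z Ht HW (conj Hz Hz') 1) as [m [Hm [Wm1 Wm2]]].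
  exists (n + m)%nat, m. split; [split; [lia|] | split; [split; auto| split; [lia|lia]]].
  rewrite iter_add; exact Wm2.
Qed.
Open Scope R_scope.

Lemma L1 (X : MetricSpace) (f : X -> X) (Hf : continuous f) (Ht : transitive f) B :
  is_open X B -> nonempty X B -> forall N, exists O, is_open X O /\ nonempty X O /\
    forall w, O w -> exists n, (N <= n)%nat /\ B (iter X f n w).
Proof.
  intros HB HnB N. induction N.
  - exists B; split; [|split]; auto. intros w Hw; exists 0%nat; split; [lia|exact Hw].
  - destruct IHN as [O [HO [HnO HP]]].
    destruct (Ht O O HO HnO HO HnO) as [p [Hp [w [Hw Hw']]]].
    exists (fun w => O w /\ O (iter X f p w)). split; [|split].
    + apply open_inter; auto. apply open_preim; auto. apply iter_cont; auto.
    + exists w; auto.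
    + intros w' [_ H']. destruct (HP _ H') as [n [Hn Hb]].
      exists (n + p)%nat; split; [lia|]. now rewrite iter_add.
Qed.

Lemma L2 (X : MetricSpace) (f : X -> X) (Hf : continuous f) (Ht : transitive f) O B N :
  is_open X O -> nonempty X O -> is_open X B -> nonempty X B ->
  exists O', is_open X O' /\ nonempty X O' /\ (forall w, O' w -> O w) /\
    forall w, O' w -> exists n, (N <= n)%nat /\ B (iter X f n w).
Proof.
  intros HO HnO HB HnB. destruct (L1 X f Hf Ht B HB HnB N) as [Q [HQ [HnQ HP]]].
  destruct (Ht O Q HO HnO HQ HnQ) as [p [Hp [w [Hw Hw']]]].
  exists (fun w => O w /\ Q (iter X f p w)). split; [|split; [|split]].
  + apply open_inter; auto. apply open_preim; auto. apply iter_cont; auto.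
  + exists w; auto.
  + intros w' [h _]; exact h.
  + intros w' [_ H']. destruct (HP _ H') as [n [Hn Hb]].
    exists (n + p)%nat; split; [lia|]. now rewrite iter_add.
Qed.

Lemma L3 (X : MetricSpace) (f : X -> X) (Hf : continuous f) (Ht : transitive f) r N
  (Hr : 0 < r) (l : list X) : forall O,
  is_open X O -> nonempty X O ->
  exists O', is_open X O' /\ nonempty X O' /\ (forall w, O' w -> O w) /\
    forall w, O' w -> forall c, In c l ->
      exists n, (N <= n)%nat /\ Defs.dist X c (iter X f n w) < r.
Proof.
  induction l as [|c l IH]; intros O HO HnO.
  - exists O; split; [|split; [|split]]; auto. intros w _ c [].
  - destruct (L2 X f Hf Ht O (fun z => Defs.dist X c z < r) N HO HnO (ball_open X c r))
      as [O1 [HO1 [HnO1 [Hs1 HP1]]]].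
    { exists c. rewrite (proj2 (Defs.dist_eq0 X c c) eq_refl); lra. }
    destruct (IH O1 HO1 HnO1) as [O2 [HO2 [HnO2 [Hs2 HP2]]]].
    exists O2; split; [|split; [|split]]; auto.
    intros w Hw c' [<-|Hc]; [apply HP1, Hs2, Hw | apply HP2; auto].
Qed.

Definition Qm (X : MetricSpace) (f : X -> X) m z :=
  forall y, exists n, (m <= n)%nat /\ Defs.dist X (iter X f n z) y < 2 / INR (S m).

Lemma step (X : MetricSpace) (f : X -> X) (HX : mcompact X) (Hf : continuous f)
  (Ht : transitive f) m a r : 0 < r ->
  exists a' r', 0 < r' /\ (forall z, Defs.dist X a' z <= r' -> Defs.dist X a z < r) /\
    (forall z, Defs.dist X a' z < r' -> Qm X f m z).
Proof.
  intros Hr. set (rho := / INR (S m)).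
  assert (Hrho : 0 < rho) by (apply Rinv_0_lt_compat, lt_0_INR; lia).
  destruct (HX X (fun c z => Defs.dist X c z < rho) (fun c => ball_open X c rho))
    as [l Hl].
  { intros x. exists x. rewrite (proj2 (Defs.dist_eq0 X x x) eq_refl); lra. }
  destruct (L3 X f Hf Ht rho m Hrho l (fun z => Defs.dist X a z < r) (ball_open X a r))
    as [O [HO [[a' Ha'] [Hs HP]]]].
  { exists a. rewrite (proj2 (Defs.dist_eq0 X a a) eq_refl); lra. }
  destruct (HO a' Ha') as [e [He Hb]].
  exists a', (e / 2). split; [lra|split].
  - intros z Hz. apply Hs, Hb. lra.
  - intros z Hz y. destruct (Hl y) as [c [Hc Hcy]].
    destruct (HP z ltac:(apply Hb; lra) c Hc) as [n [Hn Hd]].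
    exists n; split; auto. pose proof (Defs.dist_tri X (iter X f n z) c y).
    rewrite Defs.dist_sym in Hd. unfold rho in *.
    replace (2 / INR (S m)) with (/ INR (S m) + / INR (S m)) by (field; apply not_0_INR; lia).
    lra.
Qed.

Lemma lemE (X : MetricSpace) (f : X -> X) (HX : mcompact X) (Hne : inhabited X)
  (Hf : continuous f) (Ht : transitive f) : exists x, Trans f x.
Proof.
  destruct Hne as [x0].
  assert (H : forall m (p : X * R), exists q : X * R, 0 < snd p ->
     0 < snd q /\ (forall z, Defs.dist X (fst q) z <= snd q -> Defs.dist X (fst p) z < snd p) /\
    (forall z, Defs.dist X (fst q) z < snd q -> Qm X f m z)).
  { intros m [a r]. destruct (Rlt_dec 0 r) as [h|h].
    - destruct (step X f HX Hf Ht m a r h) as [a' [r' Hq]]. exists (a', r'). intros _; exact Hq.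
    - exists (a, r). intro; contradiction. }
  set (g := fun m p => proj1_sig (constructive_indefinite_description _ (H m p))).
  assert (Hg : forall m p, 0 < snd p -> _) by
    (intros m p; exact (proj2_sig (constructive_indefinite_description _ (H m p)))).
  set (sq := fix sq n := match n with O => (x0, 1) | S k => g k (sq k) end).
  assert (Hpos : forall n, 0 < snd (sq n)).
  { induction n; simpl; [lra|]. apply (Hg n (sq n) IHn). }
  assert (Hnest : forall k m, (m <= k)%nat -> forall z,
    Defs.dist X (fst (sq k)) z <= snd (sq k) -> Defs.dist X (fst (sq m)) z <= snd (sq m)).
  { induction k; intros m Hm z Hz.
    - replace m with 0%nat by lia. exact Hz.
    - destruct (Nat.eq_dec m (S k)) as [->|hm]; auto.
      apply IHk; [lia|]. left. apply (proj1 (proj2 (Hg k (sq k) (Hpos k)))). exact Hz. }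
  assert (Hz : exists z, forall m, Defs.dist X (fst (sq m)) z <= snd (sq m)).
  { apply NNPP; intro Hno.
    destruct (HX nat (fun m z => snd (sq m) < Defs.dist X (fst (sq m)) z)) as [l Hl].
    - intros m z Hz. exists (Defs.dist X (fst (sq m)) z - snd (sq m)); split; [lra|].
      intros y Hy. pose proof (Defs.dist_tri X (fst (sq m)) y z). rewrite (Defs.dist_sym X y z) in *. lra.
    - intros z. apply NNPP; intro h. apply Hno; exists z; intro m.
      apply Rnot_lt_le; intro h'. apply h; exists m; exact h'.
    - set (M := fold_right max 0%nat l).
      assert (HM : forall m, In m l -> (m <= M)%nat).
      { unfold M; clear. induction l; simpl; [tauto|]. intros m [<-|h]; [lia|].
        specialize (IHl m h); lia. }
      destruct (Hl (fst (sq M))) as [m [Hm Hd]].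
      assert (Defs.dist X (fst (sq m)) (fst (sq M)) <= snd (sq m)).
      { apply Hnest with M; auto. rewrite (proj2 (Defs.dist_eq0 X _ _) eq_refl).
        left; apply Hpos. }
      lra. }
  destruct Hz as [z Hz]. exists z. intros y e He N.
  destruct (archimed_cor1 (e / 2) ltac:(lra)) as [K [HK HK0]].
  set (m := max K N).
  assert (Qm X f m z).
  { apply (proj2 (proj2 (Hg m (sq m) (Hpos m)))).
    change (Defs.dist X (fst (sq (S m))) z < snd (sq (S m))).
    apply (proj1 (proj2 (Hg (S m) (sq (S m)) (Hpos (S m))))).
    exact (Hz (S (S m))). }
  destruct (H0 y) as [n [Hn Hd]]. exists n; split; [lia|].
  assert (/ INR (S m) <= / INR K).
  { apply Rinv_le_contravar; [apply lt_0_INR; lia| apply le_INR; lia]. }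
  unfold Rdiv in Hd. lra.
Qed.

Theorem proposition3p5 (X : MetricSpace) (f : X -> X)
  (Fam : (nat -> Prop) -> Prop)
  (HX : mcompact X) (Hne : inhabited X) (Hf : continuous f)
  (HF : furstenberg_family Fam) (HFp : proper_family Fam) :
  ((transitive f /\ F_central Fam f) <-> F_point_transitive (nabla Fam) f) /\
  (F_point_transitive (nabla Fam) f <->
     ((forall x, Trans_F (nabla Fam) f x <-> Trans f x) /\ exists x, Trans f x)).
Proof.
  split; split.
  - intros [Ht Hc]. destruct (lemE X f HX Hne Hf Ht) as [x Hx].
    exists x. apply lemD; auto.
  - intros [x Hx]. split.
    + apply (lemB X f x). apply (lemA X f Fam); auto.
    + apply (lemC X f Fam x); auto.
  - intros [x0 Hx0]. split.
    + intros x; split.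
      * apply lemA; auto.
      * intros Hx. apply lemD; auto. apply (lemC X f Fam x0); auto.
    + exists x0. apply (lemA X f Fam); auto.
  - intros [Heq [x Hx]]. exists x. apply Heq, Hx.
Qed.
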